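(* Let $G_1,G_2,\ldots,G_k$ be a finite sequence of pairwise disjoint connected graphs and let $x_i\in V(G_i)$. Let $G$ be the circuit of graphs $\{G_i\}_{i=1}^k$ with respect to the vertices $\{x_i\}_{i=1}^k$, i.e. the graph obtained by identifying the vertex $x_i$ of the graph $G_i$ with the $i$-th vertex of the cycle graph $C_k$. Then $$SO(G)\geq 2k\sqrt{2}+\sum_{i=1}^{k}SO(G_i).$$ The equality holds if and only if for every $1\leq i\leq k$, $G_i=K_1$.
   Context: For a finite simple graph $H$, the Sombor index is $SO(H)=\sum_{uv\in E(H)}\sqrt{d_u^2+d_v^2}$, where $d_u$ is the degree of vertex $u$ in $H$. *)

(* Defs.v *)
From HB Require Import structures.
From mathcomp Require Import all_boot all_order all_algebra.
Set Implicit Arguments. Unset Strict Implicit. Unset Printing Implicit Defensive.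
Import Order.TTheory GRing.Theory Num.Theory.
Local Open Scope ring_scope.

(* A finite simple graph is a symmetric irreflexive relation e on a finType. *)

Definition deg (T : finType) (e : rel T) (u : T) : nat := #|[set v | e u v]|.

(* Sombor index: sum over (unordered) edges uv of sqrt(d_u^2 + d_v^2);
   each edge is counted twice in the sum over ordered adjacent pairs, hence / 2. *)
Definition sombor (R : rcfType) (T : finType) (e : rel T) : R :=
  (\sum_(u : T) \sum_(v : T | e u v)
      Num.sqrt (((deg e u)%:R : R) ^+ 2 + ((deg e v)%:R : R) ^+ 2)) / 2.

Definition cycle_adj (k : nat) (i j : 'I_k) : bool :=
  (val j == (val i).+1 %% k)%N || (val i == (val j).+1 %% k)%N.

(* The circuit of graphs (T i, e i) w.r.t. the vertices x i: vertex set is the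
   disjoint union {i : 'I_k & T i}; edges are the edges of each G_i, plus the
   cycle edges x_i x_j for i ~ j in C_k (x_i identified with vertex i of C_k). *)
Definition circuit_rel (k : nat) (T : 'I_k -> finType) (e : forall i, rel (T i))
    (x : forall i, T i) : rel {i : 'I_k & T i} :=
  fun u v =>
    if tag u == tag v then e (tag u) (tagged u) (tagged_as u v)
    else [&& cycle_adj (tag u) (tag v), tagged u == x (tag u)
           & tagged v == x (tag v)].

(* Main.v *)
Require Import Defs.
From HB Require Import structures.
From mathcomp Require Import all_boot all_order all_algebra.
From mathcomp Require Import zify ring lra.
Import Order.TTheory GRing.Theory Num.Theory.
Local Open Scope ring_scope.


Lemma modS_k (k n : nat) : (n < k)%N -> (n.+1 %% k = if n.+1 == k then 0 else n.+1)%N.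
Proof. move=> h; case: eqP => [->|ne]; [exact: modnn | apply: modn_small; lia]. Qed.

Ltac crush := repeat (case: ifP => [/eqP ? | /negbT/eqP ?]); repeat (case: eqP => ? /=); try done; lia.

Lemma nbr_card (k : nat) (i : 'I_k) : (3 <= k)%N ->
  #|[pred j : 'I_k | (j != i) && cycle_adj i j]| = 2%N.
Proof.
move=> k3.
have Hs : ((if (val i).+1 == k then 0 else (val i).+1) < k)%N.
  by have := ltn_ord i; case: eqP => /= ? ?; lia.
have Hp : ((if val i == 0%N then k.-1 else (val i).-1) < k)%N.
  by have := ltn_ord i; case: eqP => /= ? ?; lia.
have sp : Ordinal Hs != Ordinal Hp.
  rewrite -(inj_eq val_inj) /=; have := ltn_ord i.
  crush.
rewrite (@eq_card _ _ (pred2 (Ordinal Hs) (Ordinal Hp))) ?card2 ?sp //.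
move=> j; rewrite !inE /cycle_adj -!(inj_eq val_inj) /= !modS_k //.
have := ltn_ord i; have := ltn_ord j.
crush.
Qed.

Lemma isolated (T' : finType) (r : rel T') (a b : T') :
  connect r a b -> (forall c, ~~ r a c) -> b = a.
Proof.
move=> /connectP [p pth ->] H; case: p pth => [//|c p] /= /andP [h _].
by move: (H c); rewrite h.
Qed.

Section Circ.
Variables (k : nat) (T : 'I_k -> finType) (e : forall i, rel (T i)) (x : forall i, T i).
Local Notation V := {i : 'I_k & T i}.
Local Notation E := (circuit_rel e x).

Lemma sig_sum (W : Type) (idx : W) (op : Monoid.com_law idx) (P : pred V) (F : V -> W) :
  \big[op/idx]_(v | P v) F v =
  \big[op/idx]_(i : 'I_k) \big[op/idx]_(b : T i | P (Tagged T b)) F (Tagged T b).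
Proof.
rewrite (@sig_big_dep _ _ op _ _ xpredT (fun i b => P (Tagged T b)) (fun i b => F (Tagged T b))).
by apply: eq_big => -[i b].
Qed.

Lemma nbr_split (W : Type) (idx : W) (op : Monoid.com_law idx) i (a : T i) (F : V -> W) :
  \big[op/idx]_(v | E (Tagged T a) v) F v =
  op (\big[op/idx]_(b | e i a b) F (Tagged T b))
     (\big[op/idx]_(j | j != i)
        (if cycle_adj i j && (a == x i) then F (Tagged T (x j)) else idx)).
Proof.
rewrite sig_sum (bigD1 i) //=; apply: f_equal2.
  by apply: eq_bigl => b; rewrite /circuit_rel /= eqxx tagged_asE.
apply: eq_bigr => j ji; rewrite /circuit_rel /= eq_sym (negbTE ji).
case: (cycle_adj i j); case: (a == x i) => /=; try by rewrite big_pred0_eq.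
by rewrite big_pred1_eq.

Qed.

Lemma degE i (a : T i) : (3 <= k)%N ->
  deg E (Tagged T a) = (deg (e i) a + (a == x i) * 2)%N.
Proof.
move=> k3; rewrite /deg -!sum1_card.
rewrite (eq_bigl (fun v => E (Tagged T a) v)); last by move=> v; rewrite inE.
rewrite nbr_split; congr addn.
  by apply: eq_bigl => b; rewrite inE.
case: (a == x i); last by rewrite big1 // => j _; rewrite andbF.
rewrite -big_mkcondr /= (eq_bigl [pred j | (j != i) && cycle_adj i j]) //.
by rewrite sum1_card nbr_card.
by move=> j /=; rewrite andbT.
Qed.
End Circ.

Lemma sum_lt (R : numDomainType) (I : finType) (P : pred I) (F G : I -> R) i0 :
  P i0 -> (forall i, P i -> F i <= G i) -> F i0 < G i0 ->
  \sum_(i | P i) F i < \sum_(i | P i) G i.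
Proof.
move=> Pi0 H H0; rewrite (bigD1 i0) // [X in _ < X](bigD1 i0) //.
by apply: ltr_leD => //; apply: ler_sum => i /andP [Pi _]; apply: H.
Qed.

Theorem mainTheorem6 (R : rcfType) (k : nat) (T : 'I_k -> finType)
    (e : forall i, rel (T i)) (x : forall i, T i) :
  (3 <= k)%N ->
  (forall i, symmetric (e i)) ->
  (forall i, irreflexive (e i)) ->
  (forall i (a b : T i), connect (e i) a b) ->
  (2 * k%:R * Num.sqrt 2 + \sum_(i < k) sombor R (e i)
     <= sombor R (circuit_rel e x))
  /\ (sombor R (circuit_rel e x)
        = 2 * k%:R * Num.sqrt 2 + \sum_(i < k) sombor R (e i)
      <-> (forall i, #|T i| = 1%N)).
Proof.
move=> k3 sym irr conn.
set E := circuit_rel e x.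
pose d u := deg E u.
pose f (m n : nat) : R := Num.sqrt (m%:R ^+ 2 + n%:R ^+ 2).
pose In i (a : T i) := \sum_(b | e i a b) f (d (Tagged T a)) (d (Tagged T b)).
pose B i (a : T i) := \sum_(b | e i a b) f (deg (e i) a) (deg (e i) b).
pose S i := \sum_(j | (j != i) && cycle_adj i j)
               f (d (Tagged T (x i))) (d (Tagged T (x j))).
pose X := \sum_i (\sum_a In i a + S i).
pose Y := \sum_i (\sum_a B i a + 2 * f 2%N 2%N).
have f22 : f 2%N 2%N = 2 * Num.sqrt 2.
  rewrite /f (_ : (2%:R : R) ^+ 2 + 2%:R ^+ 2 = 2 ^+ 2 * 2); last by ring.
  by rewrite sqrtrM ?sqrtr_sqr ?ger0_norm // exprn_ge0.
have fmono m1 m2 n1 n2 : (m1 <= n1)%N -> (m2 <= n2)%N -> f m1 m2 <= f n1 n2.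
  move=> h1 h2; rewrite /f ler_wsqrtr // -!natrX -!natrD ler_nat.
  by apply: leq_add; apply: leq_mul.
have fstrict m1 m2 n1 n2 : (m1 < n1)%N -> (m2 <= n2)%N -> f m1 m2 < f n1 n2.
  move=> h1 h2; rewrite /f ltr_sqrt; last first.
    by rewrite -!natrX -!natrD ltr0n; apply: ltn_addr; rewrite expn_gt0; case: n1 h1.
  rewrite -!natrX -!natrD ltr_nat.
  apply: (@leq_ltn_trans (m1 ^ 2 + n2 ^ 2)); first by rewrite leq_add2l; apply: leq_mul.
  by rewrite ltn_add2r; apply: ltn_mul.
have dE i (a : T i) : d (Tagged T a) = (deg (e i) a + (a == x i) * 2)%N.
  exact: degE.
have HL : sombor R E = X / 2.
  rewrite /sombor sig_sum; congr (_ / 2); apply: eq_bigr => i _.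
  rewrite (eq_bigr (fun a => In i a + (if a == x i then S i else 0))).
    by rewrite big_split /= -big_mkcond big_pred1_eq.
  move=> a _; rewrite nbr_split; congr (_ + _).
  case: eqP => [->|_].
    by rewrite -big_mkcondr /=; apply: eq_bigl => j; rewrite andbT.
  by rewrite big1 // => j _; rewrite andbF.
have HR : 2 * k%:R * Num.sqrt 2 + \sum_(i < k) sombor R (e i) = Y / 2.
  rewrite /Y big_split /= sumr_const card_ord [RHS]mulrDl addrC; congr (_ + _).
    by rewrite mulr_suml; apply: eq_bigr.
  by rewrite f22 -mulr_natr; field.
have nc i : #|(fun j : 'I_k => (j != i) && cycle_adj i j)| = 2%N := nbr_card _ i k3.
have Hle i : \sum_a B i a + 2 * f 2%N 2%N <= \sum_a In i a + S i.
  apply: lerD.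
    apply: ler_sum => a _; apply: ler_sum => b _.
    by apply: fmono; rewrite dE leq_addr.
  apply: (@le_trans _ _ (\sum_(j | (j != i) && cycle_adj i j) f 2%N 2%N)).
    by rewrite sumr_const nc mulr_natl.
  by apply: ler_sum => j _; apply: fmono; rewrite dE eqxx leq_addl.
have XY : Y <= X by apply: ler_sum => i _; apply: Hle.
split; first by rewrite HL HR ler_pM2r ?invr_gt0.
rewrite HL HR; split.
  move=> eqXY i.
  have {}eqXY : X = Y.
    by move/(congr1 (fun t => t * 2)): eqXY; rewrite !divfK ?pnatr_eq0.
  have nonb : forall b, ~~ e i (x i) b.
    move=> b; apply/negP => eb.
    have : Y < X.
      apply: (@sum_lt _ _ _ _ _ i) => //.
      apply: ltr_leD; last first.
        apply: (@le_trans _ _ (\sum_(j | (j != i) && cycle_adj i j) f 2%N 2%N)).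
          by rewrite sumr_const nc mulr_natl.
        by apply: ler_sum => j _; apply: fmono; rewrite dE eqxx leq_addl.
      apply: (@sum_lt _ _ _ _ _ (x i)) => //.
        by move=> a _; apply: ler_sum => b' _; apply: fmono; rewrite dE leq_addr.
      apply: (@sum_lt _ _ _ _ _ b) => //.
        by move=> b' _; apply: fmono; rewrite dE leq_addr.
      by apply: fstrict; rewrite dE ?eqxx /=; lia.
    by rewrite eqXY ltxx.
  rewrite -(card1 (x i)); apply: eq_card => a; rewrite !inE.
  by rewrite (isolated _ _ _ _ (conn i (x i) a) nonb) eqxx.
move=> c1.
have Hall j (a : T j) : a = x j.
  by case: (fintype1 (c1 j)) => y Hy; rewrite (Hy a) (Hy (x j)).
have noe j (a b : T j) : e j a b = false by rewrite (Hall j a) (Hall j b) irr.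
have degx0 j : deg (e j) (x j) = 0%N.
  rewrite /deg; apply/eqP; rewrite cards_eq0; apply/eqP/setP => v.
  by rewrite !inE noe.
suff -> : X = Y by [].
apply: eq_bigr => i _; congr (_ + _).
  apply: eq_bigr => a _; apply: eq_bigr => b eb; by rewrite noe in eb.
transitivity (\sum_(j | (j != i) && cycle_adj i j) f 2%N 2%N).
  by apply: eq_bigr => j _; rewrite !dE !eqxx !degx0.
by rewrite sumr_const nc mulr_natl.
Qed.
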